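(* Let $g\ge 2$ and let $\Lambda_1,\dots,\Lambda_g$ be lattices in $\mathbb{C}$ such that $\Lambda_1+\cdots+\Lambda_g$ is not discrete. Then there is $2\le j\le g$ such that $\Lambda_1+\Lambda_j$ is not discrete. Moreover, if $\Lambda_1+\cdots+\Lambda_g$ is dense in $\mathbb{C}$, then for such a $j$ there is $2\le k\le g$ such that $\Lambda_1+\Lambda_j+\Lambda_k$ is dense in $\mathbb{C}$.
   Context: A lattice in $\mathbb{C}$ is a discrete subgroup $\mathbb{Z}a+\mathbb{Z}b$ with $a,b$ linearly independent over $\mathbb{R}$. *)

(* Defs.v *)
From Stdlib Require Import Reals List ZArith.
From Coquelicot Require Import Coquelicot.
Open Scope R_scope.
Open Scope C_scope.

Definition R_lin_indep (a b : C) : Prop :=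
  forall r s : R, RtoC r * a + RtoC s * b = 0 -> r = 0%R /\ s = 0%R.

Definition Zspan2 (a b : C) : C -> Prop :=
  fun z => exists m n : Z, z = RtoC (IZR m) * a + RtoC (IZR n) * b.

Fixpoint sumsets (l : list (C -> Prop)) : C -> Prop :=
  match l with
  | nil => fun z => z = 0
  | A :: l' => fun z => exists s t, A s /\ sumsets l' t /\ z = s + t
  end.

Definition discrete_set (S : C -> Prop) : Prop :=
  forall x, S x -> exists eps : R, (0 < eps)%R /\
    forall y, S y -> (Cmod (y - x) < eps)%R -> y = x.

Definition dense_set (S : C -> Prop) : Prop :=
  forall (z : C) (eps : R), (0 < eps)%R -> exists x, S x /\ (Cmod (x - z) < eps)%R.

(* Main.v *)
Require Import Defs.
From Stdlib Require Import Reals List ZArith Lia Lra Classical.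
From Coquelicot Require Import Coquelicot.
Open Scope R_scope.
Lemma pigeon n : forall f : nat -> nat, (forall i, (i <= n)%nat -> (f i < n)%nat) ->
  exists i j, (i < j <= n)%nat /\ f i = f j.
Proof.
  induction n as [|n IH]; intros f Hf.
  - specialize (Hf 0%nat (le_n 0)). lia.
  - destruct (classic (exists i, (i <= n)%nat /\ f i = f (S n))) as [(i&Hi&E)|NE].
    + exists i, (S n). split; [lia|auto].
    + set (f' := fun i => if Nat.eqb (f i) n then f (S n) else f i).
      assert (Hf' : forall i, (i <= n)%nat -> (f' i < n)%nat).
      { intros i Hi. unfold f'. destruct (Nat.eqb_spec (f i) n).
        - assert (f (S n) <> n) by (intro; apply NE; exists i; split; [auto|congruence]).
          specialize (Hf (S n) (le_n _)). lia.
        - specialize (Hf i ltac:(lia)). lia. }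
      destruct (IH f' Hf') as (i&j&Hij&E). exists i, j. split; [lia|].
      unfold f' in E.
      destruct (Nat.eqb_spec (f i) n), (Nat.eqb_spec (f j) n); try congruence.
      * exfalso; apply NE; exists j; split; [lia|congruence].
      * exfalso; apply NE; exists i; split; [lia|congruence].
Qed.

Definition flr (x : R) : Z := (up x - 1)%Z.
Lemma flr_spec x : IZR (flr x) <= x < IZR (flr x) + 1.
Proof.
  unfold flr. destruct (archimed x) as [H1 H2]. rewrite minus_IZR. simpl. lra.
Qed.

Lemma dirichlet (t : R) (K : nat) : (1 <= K)%nat ->
  exists n : nat, (1 <= n <= K)%nat /\ exists m : Z, Rabs (INR n * t - IZR m) < 1 / INR K.
Proof.
  intros HK.
  assert (KP : 0 < INR K) by (apply lt_0_INR; lia).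
  set (fr := fun i : nat => INR i * t - IZR (flr (INR i * t))).
  assert (Hfr : forall i, 0 <= fr i < 1) by (intro i; unfold fr; pose proof (flr_spec (INR i * t)); lra).
  set (f := fun i => Z.to_nat (flr (INR K * fr i))).
  assert (Hb : forall i, (0 <= flr (INR K * fr i) < Z.of_nat K)%Z).
  { intro i. pose proof (flr_spec (INR K * fr i)). pose proof (Hfr i).
    assert (0 <= INR K * fr i < INR K) by nra.
    split.
    - assert (-1 < flr (INR K * fr i))%Z; [apply lt_IZR; simpl; lra|lia].
    - apply lt_IZR. rewrite <- INR_IZR_INZ. lra. }
  destruct (pigeon K f) as (i&j&Hij&E).
  { intros i _. unfold f. specialize (Hb i). lia. }
  exists (j - i)%nat. split; [lia|].
  exists (flr (INR j * t) - flr (INR i * t))%Z.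
  unfold f in E. pose proof (Hb i) as Bi. pose proof (Hb j) as Bj.
  assert (E' : flr (INR K * fr i) = flr (INR K * fr j)) by lia.
  pose proof (flr_spec (INR K * fr i)) as Si. pose proof (flr_spec (INR K * fr j)) as Sj.
  rewrite E' in Si.
  assert (Rabs (fr j - fr i) < 1 / INR K).
  { apply Rabs_def1.
    - apply (Rmult_lt_reg_l (INR K)); auto. field_simplify; lra.
    - apply (Rmult_lt_reg_l (INR K)); auto. field_simplify; lra. }
  replace (INR (j - i) * t - IZR (flr (INR j * t) - flr (INR i * t))) with (fr j - fr i); auto.
  unfold fr. rewrite minus_INR by lia. rewrite minus_IZR. ring.
Qed.
Open Scope C_scope.
Definition grp (S : C -> Prop) :=
  S 0 /\ (forall x y, S x -> S y -> S (x + y)) /\ (forall x, S x -> S (- x)).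

Lemma grp0 S : grp S -> S 0. Proof. intros [H _]; exact H. Qed.
Lemma grpD S x y : grp S -> S x -> S y -> S (x + y).
Proof. intros (_&H&_); auto. Qed.
Lemma grpN S x : grp S -> S x -> S (- x).
Proof. intros (_&_&H); auto. Qed.
Lemma grpB S x y : grp S -> S x -> S y -> S (x - y).
Proof. intros G Hx Hy. unfold Cminus. apply grpD; auto. apply grpN; auto. Qed.

Lemma grp_nat S x n : grp S -> S x -> S (RtoC (INR n) * x).
Proof.
  intros G Hx. induction n as [|n IH].
  - simpl. replace (RtoC 0 * x) with (RtoC 0) by ring. apply grp0; auto.
  - rewrite S_INR, RtoC_plus.
    replace ((RtoC (INR n) + RtoC 1) * x) with (RtoC (INR n) * x + x) by ring.
    apply grpD; auto.
Qed.

Lemma grp_Z S x m : grp S -> S x -> S (RtoC (IZR m) * x).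
Proof.
  intros G Hx. destruct (Z_le_gt_dec 0 m).
  - rewrite <- (Z2Nat.id m) by lia. rewrite <- INR_IZR_INZ. apply grp_nat; auto.
  - replace m with (- Z.of_nat (Z.to_nat (- m)))%Z by lia.
    rewrite opp_IZR, <- INR_IZR_INZ, RtoC_opp.
    replace (- RtoC (INR (Z.to_nat (- m))) * x) with (- (RtoC (INR (Z.to_nat (- m))) * x)) by ring.
    apply grpN; auto. apply grp_nat; auto.
Qed.

Lemma Zspan2_grp a b : grp (Zspan2 a b).
Proof.
  unfold Zspan2; split; [|split].
  - exists 0%Z, 0%Z. simpl. ring.
  - intros x y (m&n&->) (m'&n'&->). exists (m+m')%Z, (n+n')%Z.
    rewrite !plus_IZR, !RtoC_plus. ring.
  - intros x (m&n&->). exists (-m)%Z, (-n)%Z. rewrite !opp_IZR, !RtoC_opp. ring.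
Qed.

Lemma Zspan2_a a b : Zspan2 a b a.
Proof. exists 1%Z, 0%Z. change (IZR 1) with 1%R. change (IZR 0) with 0%R. ring. Qed.
Lemma Zspan2_b a b : Zspan2 a b b.
Proof. exists 0%Z, 1%Z. change (IZR 1) with 1%R. change (IZR 0) with 0%R. ring. Qed.

Lemma sumsets_grp l : (forall A, In A l -> grp A) -> grp (sumsets l).
Proof.
  induction l as [|A l IH]; intros H.
  - simpl. split; [reflexivity|split].
    + intros x y -> ->. ring.
    + intros x ->. ring.
  - assert (GA : grp A) by (apply H; left; auto).
    assert (Gl : grp (sumsets l)) by (apply IH; intros; apply H; right; auto).
    simpl. split; [|split].
    + exists 0, 0. split; [apply grp0; auto|split; [apply grp0; auto|ring]].
    + intros x y (s&t&Hs&Ht&->) (s'&t'&Hs'&Ht'&->).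
      exists (s+s'), (t+t'). split; [apply grpD; auto|split; [apply grpD; auto|ring]].
    + intros x (s&t&Hs&Ht&->). exists (-s), (-t). split; [apply grpN; auto|split; [apply grpN; auto|ring]].
Qed.

Lemma sumsets_sub (K : C -> Prop) l : grp K ->
  (forall A, In A l -> forall z, A z -> K z) -> forall z, sumsets l z -> K z.
Proof.
  intros GK. induction l as [|A l IH]; intros H z Hz; simpl in Hz.
  - subst. apply grp0; auto.
  - destruct Hz as (s&t&Hs&Ht&->). apply grpD; auto.
    + apply (H A); auto. left; auto.
    + apply IH; auto. intros; apply (H A0); auto. right; auto.
Qed.

Lemma sumsets_in l A z : (forall B, In B l -> grp B) -> In A l -> A z -> sumsets l z.
Proof.
  induction l as [|B l IH]; intros G HA Hz; simpl in *.
  - contradiction.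
  - destruct HA as [<-|HA].
    + exists z, 0. split; auto. split.
      * apply grp0, sumsets_grp. auto.
      * ring.
    + exists 0, z. split; [apply grp0; auto|]. split; [apply IH; auto|ring].
Qed.
Lemma C_ext (x y : C) : Re x = Re y -> Im x = Im y -> x = y.
Proof. destruct x, y; unfold Re, Im; simpl; intros; subst; auto. Qed.

Lemma Re_plus x y : Re (x + y) = (Re x + Re y)%R. Proof. destruct x, y; reflexivity. Qed.
Lemma Im_plus x y : Im (x + y) = (Im x + Im y)%R. Proof. destruct x, y; reflexivity. Qed.
Lemma Re_opp x : Re (- x) = (- Re x)%R. Proof. destruct x; reflexivity. Qed.
Lemma Im_opp x : Im (- x) = (- Im x)%R. Proof. destruct x; reflexivity. Qed.
Lemma Re_minus x y : Re (x - y) = (Re x - Re y)%R. Proof. destruct x, y; reflexivity. Qed.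
Lemma Im_minus x y : Im (x - y) = (Im x - Im y)%R. Proof. destruct x, y; reflexivity. Qed.

Lemma Cmod_le_ReIm w : (Cmod w <= Rabs (Re w) + Rabs (Im w))%R.
Proof.
  replace w with (RtoC (Re w) + Ci * RtoC (Im w)) at 1.
  - eapply Rle_trans; [apply Cmod_triangle|]. rewrite Cmod_mult, Cmod_Ci, !Cmod_R. lra.
  - apply C_ext; destruct w; unfold Re, Im; simpl; ring.
Qed.

Lemma Im_le_Cmod w : (Rabs (Im w) <= Cmod w)%R.
Proof. pose proof (Rmax_Cmod w). pose proof (Rmax_r (Rabs (fst w)) (Rabs (snd w))). unfold Im. lra. Qed.
Lemma Re_le_Cmod w : (Rabs (Re w) <= Cmod w)%R.
Proof. pose proof (Rmax_Cmod w). pose proof (Rmax_l (Rabs (fst w)) (Rabs (snd w))). unfold Re. lra. Qed.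

Lemma basis_decomp (u v z : C) : u <> 0 -> Im (v / u) <> 0%R ->
  exists s t : R, z = RtoC s * u + RtoC t * v.
Proof.
  intros Hu Hq. set (q := v / u). set (w := z / u).
  set (t := (Im w / Im q)%R). set (s := (Re w - t * Re q)%R).
  exists s, t.
  assert (Ew : w = RtoC s + RtoC t * q).
  { apply C_ext.
    - rewrite Re_plus, re_RtoC, re_scal_l. unfold s. ring.
    - rewrite Im_plus, im_RtoC, im_scal_l. unfold t. field. auto. }
  replace z with (w * u) by (unfold w; field; auto).
  replace v with (q * u) by (unfold q; field; auto).
  rewrite Ew. ring.
Qed.


Lemma indep_facts a b : R_lin_indep a b -> a <> 0 /\ Im (b / a) <> 0%R.
Proof.
  intros H. assert (Ha : a <> 0).
  { intros ->. destruct (H 1%R 0%R) as [H1 _]. - ring. - lra. }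
  split; auto. intros Hq.
  destruct (H (Re (b / a)) (Ropp 1)) as [_ H1]; [|lra].
  replace b with ((b / a) * a) at 2 by (field; auto).
  replace (b / a) with (RtoC (Re (b/a))) at 2.
  - rewrite RtoC_opp. ring.
  - apply C_ext; rewrite ?re_RtoC, ?im_RtoC; auto.
Qed.

Lemma Cmod_lower (a b : C) (x y : R) : a <> 0 ->
  (Cmod a * (Rabs y * Rabs (Im (b / a))) <= Cmod (RtoC x * a + RtoC y * b))%R.
Proof.
  intros Ha.
  replace (RtoC x * a + RtoC y * b) with ((RtoC x + RtoC y * (b / a)) * a) by (field; auto).
  rewrite Cmod_mult.
  pose proof (Im_le_Cmod (RtoC x + RtoC y * (b / a))) as H.
  rewrite Im_plus, im_RtoC, im_scal_l, Rplus_0_l, Rabs_mult in H.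
  pose proof (Cmod_ge_0 a). nra.
Qed.

Open Scope R_scope.
Open Scope C_scope.

Lemma frac_bound (s : R) : (0 <= s - IZR (flr s) < 1)%R.
Proof. pose proof (flr_spec s). lra. Qed.

Lemma dense_crit (S : C -> Prop) : grp S ->
  (forall d : R, (0 < d)%R -> exists u v, S u /\ S v /\ u <> 0 /\ (Cmod u < d)%R /\ (Cmod v < d)%R
      /\ Im (v / u) <> 0%R) -> dense_set S.
Proof.
  intros G H z eps He.
  destruct (H (eps / 2)%R ltac:(lra)) as (u&v&Su&Sv&Hu&Hcu&Hcv&Hq).
  destruct (basis_decomp u v z Hu Hq) as (s&t&Ez).
  exists (RtoC (IZR (flr s)) * u + RtoC (IZR (flr t)) * v). split.
  - apply grpD; auto; apply grp_Z; auto.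
  - replace (RtoC (IZR (flr s)) * u + RtoC (IZR (flr t)) * v - z)
      with (- (RtoC (s - IZR (flr s)) * u + RtoC (t - IZR (flr t)) * v)).
    2:{ rewrite Ez, !RtoC_minus. ring. }
    rewrite Cmod_opp. eapply Rle_lt_trans; [apply Cmod_triangle|].
    rewrite !Cmod_mult, !Cmod_R. pose proof (frac_bound s). pose proof (frac_bound t).
    rewrite !Rabs_pos_eq by lra. pose proof (Cmod_ge_0 u). pose proof (Cmod_ge_0 v). nra.
Qed.

Lemma nondiscrete_small (S : C -> Prop) : grp S -> ~ discrete_set S ->
  forall d : R, (0 < d)%R -> exists u, S u /\ u <> 0 /\ (Cmod u < d)%R.
Proof.
  intros G ND d Hd. apply NNPP; intro N. apply ND. intros x Sx. exists d. split; auto.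
  intros y Sy Hy. apply NNPP; intro Hne. apply N. exists (y - x). split; [apply grpB; auto|].
  split; auto. intro E. apply Hne. apply Ceq_minus in E. auto.
Qed.

Lemma discrete_zero (S : C -> Prop) : grp S -> discrete_set S ->
  exists eps : R, (0 < eps)%R /\ forall y, S y -> (Cmod y < eps)%R -> y = 0.
Proof.
  intros G D. destruct (D 0 (grp0 S G)) as (eps&He&H). exists eps; split; auto.
  intros y Sy Hy. apply H; auto. replace (y - 0) with y by ring. auto.
Qed.

Lemma common_N (P : nat -> nat -> Prop) (l : list nat) :
  (forall N M i, P N i -> P (N * M)%nat i) ->
  (forall i, In i l -> exists N, (1 <= N)%nat /\ P N i) ->
  exists N, (1 <= N)%nat /\ forall i, In i l -> P N i.
Proof.
  intros Hm. induction l as [|x l IH]; intros H.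
  - exists 1%nat. split; auto. intros i [].
  - destruct IH as (N&HN&HP). { intros; apply H; right; auto. }
    destruct (H x (or_introl eq_refl)) as (N'&HN'&HP').
    exists (N' * N)%nat. split; [lia|]. intros i [<-|Hi].
    + apply Hm; auto.
    + rewrite Nat.mul_comm. apply Hm; auto.
Qed.

Lemma in_map_L (L : nat -> C -> Prop) g A :
  In A (map L (seq 1 g)) -> exists i, (1 <= i <= g)%nat /\ A = L i.
Proof. intros H. apply in_map_iff in H. destruct H as (i&<-&Hi). apply in_seq in Hi. exists i; split; [lia|auto]. Qed.

Lemma L_in_map (L : nat -> C -> Prop) g i : (1 <= i <= g)%nat -> In (L i) (map L (seq 1 g)).
Proof. intros H. apply in_map. apply in_seq. lia. Qed.

Lemma Zspan2_sub (K : C -> Prop) a b : grp K -> K a -> K b -> forall z, Zspan2 a b z -> K z.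
Proof. intros G Ha Hb z (m&n&->). apply grpD; auto; apply grp_Z; auto. Qed.
Open Scope R_scope.
Open Scope C_scope.

Definition KN (a1 b1 : C) (N : nat) : C -> Prop :=
  fun z => exists m n : Z, RtoC (INR N) * z = RtoC (IZR m) * a1 + RtoC (IZR n) * b1.

Lemma KN_grp a1 b1 N : grp (KN a1 b1 N).
Proof.
  unfold KN; split; [|split].
  - exists 0%Z, 0%Z. simpl. ring.
  - intros x y (m&n&Ex) (m'&n'&Ey). exists (m+m')%Z, (n+n')%Z.
    rewrite !plus_IZR, !RtoC_plus.
    replace (RtoC (INR N) * (x + y)) with (RtoC (INR N) * x + RtoC (INR N) * y) by ring.
    rewrite Ex, Ey. ring.
  - intros x (m&n&Ex). exists (-m)%Z, (-n)%Z. rewrite !opp_IZR, !RtoC_opp.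
    replace (RtoC (INR N) * - x) with (- (RtoC (INR N) * x)) by ring. rewrite Ex. ring.
Qed.

Lemma KN_mono a1 b1 N M z : KN a1 b1 N z -> KN a1 b1 (N * M) z.
Proof.
  intros (m&n&E). exists (Z.of_nat M * m)%Z, (Z.of_nat M * n)%Z.
  rewrite !mult_IZR, <- !INR_IZR_INZ, mult_INR, !RtoC_mult.
  replace (RtoC (INR N) * RtoC (INR M) * z) with (RtoC (INR M) * (RtoC (INR N) * z)) by ring.
  rewrite E. ring.
Qed.

Lemma Rabs_IZR_ge1 n : n <> 0%Z -> (1 <= Rabs (IZR n))%R.
Proof. intros H. rewrite Rabs_Zabs. apply IZR_le. lia. Qed.

Lemma KN_lower a1 b1 : R_lin_indep a1 b1 -> exists c0 : R, (0 < c0)%R /\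
  forall N z, (1 <= N)%nat -> KN a1 b1 N z -> z <> 0 -> (c0 / INR N <= Cmod z)%R.
Proof.
  intros HI. destruct (indep_facts a1 b1 HI) as [Ha Hq].
  set (c0 := (Cmod a1 * Rmin 1 (Rabs (Im (b1 / a1))))%R).
  assert (Ca : (0 < Cmod a1)%R) by (apply Cmod_gt_0; auto).
  assert (Cq : (0 < Rabs (Im (b1 / a1)))%R) by (apply Rabs_pos_lt; auto).
  assert (Hm1 : (Rmin 1 (Rabs (Im (b1 / a1))) <= 1)%R) by apply Rmin_l.
  assert (Hm2 : (Rmin 1 (Rabs (Im (b1 / a1))) <= Rabs (Im (b1 / a1)))%R) by apply Rmin_r.
  assert (Hm0 : (0 < Rmin 1 (Rabs (Im (b1 / a1))))%R) by (apply Rmin_pos; lra).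
  exists c0. split; [unfold c0; nra|].
  intros N z HN (m&n&E) Hz.
  assert (NP : (0 < INR N)%R) by (apply lt_0_INR; lia).
  assert (key : (c0 <= Cmod (RtoC (INR N) * z))%R).
  { rewrite E. destruct (Z.eq_dec n 0) as [->|Hn].
    - assert (Hm : m <> 0%Z).
      { intros ->. apply Hz. assert (RtoC (INR N) * z = 0) by (rewrite E; simpl; ring).
        assert (RtoC (INR N) * z <> 0); [|contradiction].
        apply Cmult_neq_0; auto. intro H1. apply (f_equal Re) in H1. simpl in H1. lra. }
      replace (RtoC (IZR m) * a1 + RtoC (IZR 0) * b1) with (RtoC (IZR m) * a1) by (simpl; ring).
      rewrite Cmod_mult, Cmod_R. pose proof (Rabs_IZR_ge1 m Hm). unfold c0. nra.
    - pose proof (Cmod_lower a1 b1 (IZR m) (IZR n) Ha). pose proof (Rabs_IZR_ge1 n Hn).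
      assert (Rabs (Im (b1 / a1)) <= Rabs (IZR n) * Rabs (Im (b1 / a1)))%R by nra.
      assert (Cmod a1 * Rmin 1 (Rabs (Im (b1 / a1))) <= Cmod a1 * (Rabs (IZR n) * Rabs (Im (b1 / a1))))%R
        by (apply Rmult_le_compat_l; lra).
      unfold c0. lra. }
  rewrite Cmod_mult, Cmod_R, Rabs_pos_eq in key by lra.
  apply (Rmult_le_reg_l (INR N)); auto. field_simplify; lra.
Qed.
Open Scope R_scope.
Open Scope C_scope.

Lemma nat_large (x : R) : exists K : nat, (1 <= K)%nat /\ (x < INR K)%R.
Proof.
  destruct (archimed x) as [H1 H2]. exists (S (Z.to_nat (up x))). split; [lia|].
  rewrite S_INR. destruct (Z_le_gt_dec 0 (up x)).
  - rewrite INR_IZR_INZ, Z2Nat.id by auto. lra.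
  - pose proof (pos_INR (Z.to_nat (up x))). assert (IZR (up x) < 0)%R by (apply IZR_lt; lia). lra.
Qed.

Lemma INR_C_Z S (x : C) N : grp S -> S x -> S (RtoC (INR N) * x).
Proof. intros; apply grp_nat; auto. Qed.

Lemma rat2 (a1 b1 : C) (G : C -> Prop) (z : C) : R_lin_indep a1 b1 -> grp G -> G a1 -> G b1 ->
  (exists eps : R, (0 < eps)%R /\ forall y, G y -> (Cmod y < eps)%R -> y = 0) -> G z ->
  exists N, (1 <= N)%nat /\ KN a1 b1 N z.
Proof.
  intros HI GG Ga Gb (eps&He&Hd) Gz.
  destruct (indep_facts a1 b1 HI) as [Ha Hq].
  destruct (basis_decomp a1 b1 z Ha Hq) as (t1&t2&Ez).
  set (B := (Cmod a1 + Cmod b1)%R).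
  assert (Ca : (0 < Cmod a1)%R) by (apply Cmod_gt_0; auto).
  pose proof (Cmod_ge_0 b1) as Cb.
  destruct (nat_large (B / eps)) as (K&HK&HKl).
  assert (KP : (0 < INR K)%R) by (apply lt_0_INR; lia).
  assert (BK : (B / INR K < eps)%R).
  { apply (Rmult_lt_reg_l (INR K)); auto. field_simplify; [|lra].
    apply (Rmult_lt_reg_r (/ eps)); [apply Rinv_0_lt_compat; auto|].
    field_simplify; [exact HKl|lra..]. }
  destruct (dirichlet t1 (K * K) ltac:(nia)) as (n1&Hn1&m1&Hm1).
  destruct (dirichlet (INR n1 * t2) K HK) as (t&Ht&m2&Hm2).
  rewrite mult_INR in Hm1.
  exists (t * n1)%nat. split; [nia|].
  exists (Z.of_nat t * m1)%Z, m2.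
  set (e := RtoC (INR (t * n1)) * z - RtoC (IZR (Z.of_nat t * m1)) * a1 - RtoC (IZR m2) * b1).
  assert (Ge : G e).
  { unfold e. apply (grpB G); [auto| apply (grpB G); [auto|apply grp_nat; auto|apply grp_Z; auto] | apply grp_Z; auto]. }
  assert (Ee : e = RtoC (INR t * (INR n1 * t1 - IZR m1)) * a1 + RtoC (INR t * (INR n1 * t2) - IZR m2) * b1).
  { unfold e. rewrite Ez, mult_IZR, <- INR_IZR_INZ, mult_INR.
    rewrite ?RtoC_mult, ?RtoC_minus, ?RtoC_mult. ring. }
  assert (tK : (INR t <= INR K)%R) by (apply le_INR; lia).
  assert (t0 : (1 <= INR t)%R) by (apply (le_INR 1); lia).
  assert (X1 : (Rabs (INR t * (INR n1 * t1 - IZR m1)) < 1 / INR K)%R).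
  { rewrite Rabs_mult, Rabs_pos_eq by lra.
    apply Rle_lt_trans with (INR K * Rabs (INR n1 * t1 - IZR m1))%R.
    - apply Rmult_le_compat_r; [apply Rabs_pos|lra].
    - apply (Rmult_lt_reg_l (INR K)); auto.
      replace (INR K * (1 / INR K))%R with 1%R by (field; lra).
      replace (1 / (INR K * INR K))%R with (/ (INR K * INR K))%R in Hm1 by (field; lra).
      assert (0 < INR K * INR K)%R by nra.
      apply (Rmult_lt_compat_l (INR K * INR K)) in Hm1; auto.
      rewrite Rinv_r in Hm1 by lra. nra. }
  assert (Ce : (Cmod e < eps)%R).
  { rewrite Ee. eapply Rle_lt_trans; [apply Cmod_triangle|]. rewrite !Cmod_mult, !Cmod_R.
    apply Rlt_le_trans with (1 / INR K * Cmod a1 + 1 / INR K * Cmod b1)%R.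
    - apply Rplus_lt_le_compat.
      + apply Rmult_lt_compat_r; auto.
      + apply Rmult_le_compat_r; auto. lra.
    - unfold B in BK. replace (1 / INR K * Cmod a1 + 1 / INR K * Cmod b1)%R
        with ((Cmod a1 + Cmod b1) / INR K)%R by (field; lra). lra. }
  pose proof (Hd e Ge Ce) as E0. unfold e in E0.
  apply Ceq_minus. rewrite <- E0. ring.
Qed.
Open Scope R_scope.
Open Scope C_scope.

Definition phi (u0 z : C) : R := Im (z / u0).
Definition psi (u0 z : C) : R := Re (z / u0).

Lemma phi_plus u0 x y : phi u0 (x + y) = (phi u0 x + phi u0 y)%R.
Proof. unfold phi. replace ((x + y) / u0) with (x / u0 + y / u0) by (unfold Cdiv; ring). apply Im_plus. Qed.
Lemma psi_plus u0 x y : psi u0 (x + y) = (psi u0 x + psi u0 y)%R.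
Proof. unfold psi. replace ((x + y) / u0) with (x / u0 + y / u0) by (unfold Cdiv; ring). apply Re_plus. Qed.
Lemma phi_opp u0 x : phi u0 (- x) = (- phi u0 x)%R.
Proof. unfold phi. replace ((- x) / u0) with (- (x / u0)) by (unfold Cdiv; ring). apply Im_opp. Qed.
Lemma psi_opp u0 x : psi u0 (- x) = (- psi u0 x)%R.
Proof. unfold psi. replace ((- x) / u0) with (- (x / u0)) by (unfold Cdiv; ring). apply Re_opp. Qed.
Lemma phi_minus u0 x y : phi u0 (x - y) = (phi u0 x - phi u0 y)%R.
Proof. unfold Cminus. rewrite phi_plus, phi_opp. ring. Qed.
Lemma psi_minus u0 x y : psi u0 (x - y) = (psi u0 x - psi u0 y)%R.
Proof. unfold Cminus. rewrite psi_plus, psi_opp. ring. Qed.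
Lemma phi_scal u0 r x : phi u0 (RtoC r * x) = (r * phi u0 x)%R.
Proof. unfold phi. replace ((RtoC r * x) / u0) with (RtoC r * (x / u0)) by (unfold Cdiv; ring). apply im_scal_l. Qed.
Lemma psi_scal u0 r x : psi u0 (RtoC r * x) = (r * psi u0 x)%R.
Proof. unfold psi. replace ((RtoC r * x) / u0) with (RtoC r * (x / u0)) by (unfold Cdiv; ring). apply re_scal_l. Qed.

Lemma Cmod_phi (u0 z : C) : u0 <> 0 -> (Rabs (phi u0 z) <= Cmod z / Cmod u0)%R.
Proof. intros H. unfold phi. rewrite <- Cmod_div by auto. apply Im_le_Cmod. Qed.

Lemma Cmod_pp (u0 z : C) : u0 <> 0 -> (Cmod z <= Cmod u0 * (Rabs (psi u0 z) + Rabs (phi u0 z)))%R.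
Proof.
  intros H. replace z with ((z / u0) * u0) at 1 by (field; auto).
  rewrite Cmod_mult. pose proof (Cmod_le_ReIm (z / u0)). pose proof (Cmod_ge_0 u0).
  unfold psi, phi. nra.
Qed.

Lemma real_mult (u0 z : C) : u0 <> 0 -> phi u0 z = 0%R -> z = RtoC (psi u0 z) * u0.
Proof.
  intros H Hp. replace z with ((z / u0) * u0) at 1 by (field; auto). f_equal.
  apply C_ext; rewrite ?re_RtoC, ?im_RtoC; auto.
Qed.

Lemma Cmod_real (u0 u : C) : u0 <> 0 -> phi u0 u = 0%R -> Cmod u = (Rabs (psi u0 u) * Cmod u0)%R.
Proof. intros H Hp. rewrite (real_mult u0 u) at 1 by auto. rewrite Cmod_mult, Cmod_R. auto. Qed.

Lemma RtoC_neq0 r : r <> 0%R -> RtoC r <> 0.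
Proof. intros H E. apply (f_equal Re) in E. simpl in E. auto. Qed.

Lemma Im_div_real (u0 u w : C) : u0 <> 0 -> phi u0 u = 0%R -> psi u0 u <> 0%R ->
  Im (w / u) = (phi u0 w / psi u0 u)%R.
Proof.
  intros H Hp Hs. pose proof (real_mult u0 u H Hp) as E. set (r := psi u0 u) in *. rewrite E.
  replace (w / (RtoC r * u0)) with ((w / u0) * RtoC (/ r)).
  - rewrite im_scal_r. unfold phi. unfold Rdiv. auto.
  - rewrite RtoC_inv by auto. field. split; auto. apply RtoC_neq0; auto.
Qed.

Lemma rat1 (u0 : C) (G : C -> Prop) (g0 z : C) : grp G -> G g0 -> phi u0 g0 <> 0%R ->
  (exists eta : R, (0 < eta)%R /\ forall h, G h -> (Rabs (phi u0 h) < eta)%R -> phi u0 h = 0%R) ->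
  G z -> exists N, (1 <= N)%nat /\ exists m : Z, (INR N * phi u0 z)%R = (IZR m * phi u0 g0)%R.
Proof.
  intros GG Gg Hc (eta&He&Hd) Gz. set (c := phi u0 g0) in *.
  assert (Cp : (0 < Rabs c)%R) by (apply Rabs_pos_lt; auto).
  destruct (nat_large (Rabs c / eta)) as (K&HK&HKl).
  assert (KP : (0 < INR K)%R) by (apply lt_0_INR; lia).
  assert (BK : (Rabs c / INR K < eta)%R).
  { apply (Rmult_lt_reg_l (INR K)); auto. field_simplify; [|lra].
    apply (Rmult_lt_reg_r (/ eta)); [apply Rinv_0_lt_compat; auto|].
    field_simplify; [exact HKl|lra..]. }
  destruct (dirichlet (phi u0 z / c) K HK) as (n&Hn&m&Hm).
  exists n. split; [lia|]. exists m.
  set (h := RtoC (INR n) * z - RtoC (IZR m) * g0).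
  assert (Gh : G h) by (unfold h; apply (grpB G); [auto|apply grp_nat; auto|apply grp_Z; auto]).
  assert (Eh : phi u0 h = (c * (INR n * (phi u0 z / c) - IZR m))%R).
  { unfold h. rewrite phi_minus, !phi_scal. fold c. field. auto. }
  assert (Rabs (phi u0 h) < eta)%R.
  { rewrite Eh, Rabs_mult. apply Rle_lt_trans with (Rabs c * (1 / INR K))%R.
    - apply Rmult_le_compat_l; [apply Rabs_pos|lra].
    - unfold Rdiv in BK |- *. lra. }
  pose proof (Hd h Gh H) as H0. rewrite Eh in H0.
  apply Rmult_integral in H0. destruct H0 as [H0|H0]; [contradiction|].
  replace (INR n * phi u0 z)%R with ((INR n * (phi u0 z / c)) * c)%R by (field; auto).
  replace (INR n * (phi u0 z / c))%R with (IZR m) by lra. reflexivity.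
Qed.
Open Scope R_scope.
Open Scope C_scope.

Definition KP (u0 : C) (c : R) (N : nat) : C -> Prop :=
  fun z => exists m : Z, (INR N * phi u0 z)%R = (IZR m * c)%R.

Lemma KP_grp u0 c N : grp (KP u0 c N).
Proof.
  unfold KP; split; [|split].
  - exists 0%Z. replace (0 : C) with (RtoC 0 * 0) by ring. rewrite phi_scal. simpl. ring.
  - intros x y (m&Ex) (m'&Ey). exists (m+m')%Z. rewrite phi_plus, plus_IZR.
    rewrite Rmult_plus_distr_l, Ex, Ey. ring.
  - intros x (m&Ex). exists (-m)%Z. rewrite phi_opp, opp_IZR. rewrite <- Ropp_mult_distr_r, Ex. ring.
Qed.

Lemma KP_mono u0 c N M z : KP u0 c N z -> KP u0 c (N * M) z.
Proof.
  intros (m&E). exists (Z.of_nat M * m)%Z. rewrite mult_IZR, <- INR_IZR_INZ, mult_INR.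
  replace (INR N * INR M * phi u0 z)%R with (INR M * (INR N * phi u0 z))%R by ring.
  rewrite E. ring.
Qed.

Lemma reduce (u0 : C) (S : C -> Prop) (u w : C) : u0 <> 0 -> grp S -> S u -> phi u0 u = 0%R ->
  (0 < psi u0 u)%R -> S w ->
  exists w', S w' /\ phi u0 w' = phi u0 w /\ (Cmod w' <= Cmod u + Cmod u0 * Rabs (phi u0 w))%R.
Proof.
  intros H0 GS Su Pu Qu Sw.
  set (n := flr (psi u0 w / psi u0 u)).
  exists (w - RtoC (IZR n) * u). split; [apply (grpB S); auto; apply grp_Z; auto|].
  split; [rewrite phi_minus, phi_scal, Pu; ring|].
  eapply Rle_trans; [apply (Cmod_pp u0); auto|].
  rewrite phi_minus, phi_scal, Pu, psi_minus, psi_scal.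
  rewrite (Cmod_real u0 u H0 Pu), Rabs_pos_eq with (x := psi u0 u) by lra.
  pose proof (frac_bound (psi u0 w / psi u0 u)) as Fb. fold n in Fb.
  assert (B : (0 <= psi u0 w - IZR n * psi u0 u < psi u0 u)%R).
  { split.
    - destruct Fb as [Fb _]. apply Rmult_le_compat_r with (r := psi u0 u) in Fb; [|lra].
      replace ((psi u0 w / psi u0 u - IZR n) * psi u0 u)%R with (psi u0 w - IZR n * psi u0 u)%R in Fb
        by (field; lra). rewrite Rmult_0_l in Fb. lra.
    - destruct Fb as [_ Fb]. apply Rmult_lt_compat_r with (r := psi u0 u) in Fb; [|lra].
      replace ((psi u0 w / psi u0 u - IZR n) * psi u0 u)%R with (psi u0 w - IZR n * psi u0 u)%R in Fb
        by (field; lra). lra. }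
  rewrite Rabs_pos_eq by lra. replace (phi u0 w - IZR n * 0)%R with (phi u0 w) by ring.
  pose proof (Cmod_ge_0 u0). nra.
Qed.

Lemma pair_in_triple (A B D : C -> Prop) z : grp D ->
  sumsets (A :: B :: nil) z -> sumsets (A :: B :: D :: nil) z.
Proof.
  intros GD (s&t&Hs&(s'&t'&Hs'&Ht'&Et)&Ez). simpl in Ht'. subst.
  exists s, (s' + 0). split; auto. split; [|ring].
  exists s', 0. split; auto. split; [|ring]. exists 0, 0. split; [apply grp0; auto|]. split; [reflexivity|ring].
Qed.

Lemma triple_grp (A B D : C -> Prop) : grp A -> grp B -> grp D -> grp (sumsets (A :: B :: D :: nil)).
Proof. intros. apply sumsets_grp. intros X [<-|[<-|[<-|[]]]]; auto. Qed.
Open Scope R_scope.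
Open Scope C_scope.

Lemma pair_grp (A B : C -> Prop) : grp A -> grp B -> grp (sumsets (A :: B :: nil)).
Proof. intros GA GB. apply sumsets_grp. intros X [<-|[<-|[]]]; auto. Qed.

Lemma eq_from_minus (x y : C) : y - x = 0 -> y = x.
Proof. intros H. apply Ceq_minus in H. auto. Qed.

Lemma part1 (g : nat) (a b : nat -> C) :
  (2 <= g)%nat ->
  (forall i, (1 <= i <= g)%nat -> R_lin_indep (a i) (b i)) ->
  ~ discrete_set (sumsets (map (fun i => Zspan2 (a i) (b i)) (seq 1 g))) ->
  exists j, (2 <= j <= g)%nat /\
     ~ discrete_set (sumsets (Zspan2 (a 1%nat) (b 1%nat) :: Zspan2 (a j) (b j) :: nil)).
Proof.
  intros Hg HI ND. apply NNPP; intro NE. apply ND. clear ND.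
  set (L := fun i => Zspan2 (a i) (b i)).
  assert (HI1 : R_lin_indep (a 1%nat) (b 1%nat)) by (apply HI; lia).
  destruct (common_N (fun N i => forall z, L i z -> KN (a 1%nat) (b 1%nat) N z) (seq 1 g))
    as (N&HN&HP).
  { intros N M i H z Hz. apply KN_mono; auto. }
  { intros i Hi. apply in_seq in Hi.
    destruct (Nat.eq_dec i 1) as [->|Hi1].
    - exists 1%nat. split; auto. apply Zspan2_sub; [apply KN_grp| |].
      + exists 1%Z, 0%Z. change (IZR 1) with 1%R. change (IZR 0) with 0%R. simpl. ring.
      + exists 0%Z, 1%Z. change (IZR 1) with 1%R. change (IZR 0) with 0%R. simpl. ring.
    - set (G := sumsets (L 1%nat :: L i :: nil)).
      assert (GG : grp G) by (apply pair_grp; apply Zspan2_grp).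
      assert (GL : forall B, In B (L 1%nat :: L i :: nil) -> grp B).
      { intros X [<-|[<-|[]]]; apply Zspan2_grp. }
      assert (DG : discrete_set G).
      { apply NNPP; intro H. apply NE. exists i. split; [lia|exact H]. }
      destruct (discrete_zero G GG DG) as (eps&He&Hd).
      assert (G1 : forall z, L 1%nat z -> G z) by (intros; apply (sumsets_in _ (L 1%nat)); simpl; auto).
      assert (Gi : forall z, L i z -> G z) by (intros; apply (sumsets_in _ (L i)); simpl; auto).
      assert (Ga : G (a 1%nat)) by (apply G1; apply Zspan2_a).
      assert (Gb : G (b 1%nat)) by (apply G1; apply Zspan2_b).
      assert (Gai : G (a i)) by (apply Gi; apply Zspan2_a).
      assert (Gbi : G (b i)) by (apply Gi; apply Zspan2_b).
      assert (Ex : exists eps : R, (0 < eps)%R /\ forall y, G y -> (Cmod y < eps)%R -> y = 0) by eauto.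
      destruct (rat2 (a 1%nat) (b 1%nat) G (a i) HI1 GG Ga Gb Ex Gai) as (N1&HN1&K1).
      destruct (rat2 (a 1%nat) (b 1%nat) G (b i) HI1 GG Ga Gb Ex Gbi) as (N2&HN2&K2).
      exists (N1 * N2)%nat. split; [nia|]. apply Zspan2_sub; [apply KN_grp| |].
      + apply KN_mono; auto.
      + rewrite Nat.mul_comm. apply KN_mono; auto. }
  destruct (KN_lower _ _ HI1) as (c0&Hc0&Hlow).
  assert (Sub : forall z, sumsets (map L (seq 1 g)) z -> KN (a 1%nat) (b 1%nat) N z).
  { apply sumsets_sub; [apply KN_grp|]. intros A HA. apply in_map_iff in HA.
    destruct HA as (i&<-&Hi). apply HP; auto. }
  intros x Hx. exists (c0 / INR N)%R. split.
  { apply Rdiv_lt_0_compat; auto. apply lt_0_INR; lia. }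
  intros y Hy Hxy. apply eq_from_minus. apply NNPP; intro Hne.
  assert (KN (a 1%nat) (b 1%nat) N (y - x)) by (apply grpB; [apply KN_grp|apply Sub; auto|apply Sub; auto]).
  pose proof (Hlow N (y - x) HN H Hne). lra.
Qed.
Open Scope R_scope.
Open Scope C_scope.

Lemma small_scale (A p d : R) : (0 < A)%R -> (Rabs p < d / (2 * A))%R -> (A * Rabs p < d / 2)%R.
Proof.
  intros HA Hp. apply Rmult_lt_compat_l with (r := A) in Hp; auto.
  replace (A * (d / (2 * A)))%R with (d / 2)%R in Hp by (field; lra). auto.
Qed.

Lemma half_int (m : Z) : (Rabs (IZR m - 1/2) < 1/4)%R -> False.
Proof.
  intros H. destruct (Z_le_gt_dec m 0).
  - apply IZR_le in l. apply Rabs_def2 in H. lra.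
  - assert (1 <= IZR m)%R by (apply IZR_le; lia). apply Rabs_def2 in H. lra.
Qed.

Lemma part2 (g : nat) (a b : nat -> C) :
  (2 <= g)%nat ->
  (forall i, (1 <= i <= g)%nat -> R_lin_indep (a i) (b i)) ->
  dense_set (sumsets (map (fun i => Zspan2 (a i) (b i)) (seq 1 g))) ->
   forall j, (2 <= j <= g)%nat ->
     ~ discrete_set (sumsets (Zspan2 (a 1%nat) (b 1%nat) :: Zspan2 (a j) (b j) :: nil)) ->
     exists k, (2 <= k <= g)%nat /\
       dense_set (sumsets (Zspan2 (a 1%nat) (b 1%nat) :: Zspan2 (a j) (b j)
                           :: Zspan2 (a k) (b k) :: nil)).
Proof.
  intros Hg HI Dn j Hj ND.
  set (H := sumsets (Zspan2 (a 1%nat) (b 1%nat) :: Zspan2 (a j) (b j) :: nil)) in *.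
  set (T := fun k => sumsets (Zspan2 (a 1%nat) (b 1%nat) :: Zspan2 (a j) (b j) :: Zspan2 (a k) (b k) :: nil)).
  assert (GH : grp H) by (apply pair_grp; apply Zspan2_grp).
  assert (GT : forall k, grp (T k)) by (intro k; apply triple_grp; apply Zspan2_grp).
  assert (HT : forall k z, H z -> T k z) by (intros k z Hz; apply pair_in_triple; auto; apply Zspan2_grp).
  assert (GL : forall k B, In B (Zspan2 (a 1%nat) (b 1%nat) :: Zspan2 (a j) (b j) :: Zspan2 (a k) (b k) :: nil) -> grp B).
  { intros k X [<-|[<-|[<-|[]]]]; apply Zspan2_grp. }
  assert (T1 : forall k z, Zspan2 (a 1%nat) (b 1%nat) z -> T k z).
  { intros k z Hz. apply sumsets_in with (A := Zspan2 (a 1%nat) (b 1%nat)); [apply GL|simpl; auto|auto]. }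
  assert (Tk : forall k z, Zspan2 (a k) (b k) z -> T k z).
  { intros k z Hz. apply sumsets_in with (A := Zspan2 (a k) (b k)); [apply GL|simpl; auto|auto]. }
  pose proof (nondiscrete_small H GH ND) as small.
  assert (HI1 : R_lin_indep (a 1%nat) (b 1%nat)) by (apply HI; lia).
  destruct (indep_facts _ _ HI1) as [Ha1 _].
  destruct (classic (exists d0 u0, (0 < d0)%R /\ H u0 /\ u0 <> 0 /\
      forall u, H u -> (Cmod u < d0)%R -> phi u0 u = 0%R)) as [(d0&u0&Hd0&Hu0&Hnz&Hpar)|NY].
  2:{ exists j. split; auto. change (dense_set (T j)). apply dense_crit; auto.
      intros d Hd. destruct (small d Hd) as (u0&Hu0&Hnz&Hc).
      destruct (classic (exists u, H u /\ (Cmod u < d)%R /\ phi u0 u <> 0%R)) as [(u&Hu&Hcu&Hp)|NU].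
      - exists u0, u. split; [auto|]. split; [auto|]. split; [auto|]. split; [auto|]. split; auto.
      - exfalso. apply NY. exists d, u0. split; [auto|]. split; [auto|]. split; [auto|].
        intros u Hu Hcu. apply NNPP; intro Hp. apply NU. exists u; auto. }
  assert (Cu0 : (0 < Cmod u0)%R) by (apply Cmod_gt_0; auto).
  assert (small_par : forall d, (0 < d)%R -> exists u, H u /\ u <> 0 /\ (Cmod u < d)%R /\
            phi u0 u = 0%R /\ (0 < psi u0 u)%R).
  { intros d Hd. destruct (small (Rmin d d0) (Rmin_pos _ _ Hd Hd0)) as (u1&Hu1&Hn1&Hc1).
    pose proof (Rmin_l d d0). pose proof (Rmin_r d d0).
    assert (P1 : phi u0 u1 = 0%R) by (apply Hpar; auto; lra).
    assert (Q1 : psi u0 u1 <> 0%R).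
    { intro E0. apply Hn1. pose proof (real_mult u0 u1 Hnz P1) as E. rewrite E0 in E. rewrite E. ring. }
    destruct (Rlt_or_le 0 (psi u0 u1)) as [Hp|Hp].
    - exists u1. split; [auto|]. split; [auto|]. split; [lra|]. split; auto.
    - exists (- u1). split; [apply grpN; auto|]. split.
      { intro E. apply Hn1. replace u1 with (- - u1) by ring. rewrite E. ring. }
      split; [rewrite Cmod_opp; lra|]. rewrite phi_opp, psi_opp, P1. split; [ring|lra]. }
  assert (claimA : forall h, H h -> (Rabs (phi u0 h) < d0 / (2 * Cmod u0))%R -> phi u0 h = 0%R).
  { intros h Hh Hph. destruct (small_par (d0 / 2)%R ltac:(lra)) as (u&Hu&Hun&Hcu&Pu&Qu).
    destruct (reduce u0 H u h Hnz GH Hu Pu Qu Hh) as (h'&Hh'&Ph'&Ch').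
    rewrite <- Ph'. apply Hpar; auto. pose proof (small_scale _ _ _ Cu0 Hph). lra. }
  assert (Hg0 : exists g0, Zspan2 (a 1%nat) (b 1%nat) g0 /\ phi u0 g0 <> 0%R).
  { apply NNPP; intro NG.
    assert (P1 : phi u0 (a 1%nat) = 0%R).
    { apply NNPP; intro; apply NG; exists (a 1%nat); split; [apply Zspan2_a|auto]. }
    assert (P2 : phi u0 (b 1%nat) = 0%R).
    { apply NNPP; intro; apply NG; exists (b 1%nat); split; [apply Zspan2_b|auto]. }
    pose proof (real_mult u0 _ Hnz P1) as Ea. pose proof (real_mult u0 _ Hnz P2) as Eb.
    set (ra := psi u0 (a 1%nat)) in *. set (rb := psi u0 (b 1%nat)) in *.
    destruct (HI1 rb (- ra)%R) as [E1 E2].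
    { rewrite Ea, Eb, RtoC_opp. ring. }
    apply Ha1. rewrite Ea. assert (ra = 0%R) by lra. rewrite H0. ring. }
  destruct Hg0 as (g0&Zg0&Hc). set (c := phi u0 g0) in *.
  assert (claimB : exists k, (2 <= k <= g)%nat /\ forall eta, (0 < eta)%R ->
            exists w, T k w /\ phi u0 w <> 0%R /\ (Rabs (phi u0 w) < eta)%R).
  { apply NNPP; intro NB.
    assert (Eta : forall k, (2 <= k <= g)%nat -> exists eta, (0 < eta)%R /\
               forall h, T k h -> (Rabs (phi u0 h) < eta)%R -> phi u0 h = 0%R).
    { intros k Hk. apply NNPP; intro NE. apply NB. exists k. split; auto. intros eta He.
      apply NNPP; intro NW. apply NE. exists eta. split; auto. intros h Th Hh.
      apply NNPP; intro Hp. apply NW. exists h; auto. }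
    destruct (common_N (fun N i => forall z, Zspan2 (a i) (b i) z -> KP u0 c N z) (seq 1 g))
      as (N&HN&HP).
    { intros N M i Hi z Hz. apply KP_mono; auto. }
    { intros i Hi. apply in_seq in Hi. set (k := Nat.max 2 i). assert (Hk : (2 <= k <= g)%nat) by lia.
      assert (Ti : forall z, Zspan2 (a i) (b i) z -> T k z).
      { intros z Hz. destruct (Nat.eq_dec i 1) as [->|Hne]; [apply T1; auto|].
        assert (Ek : k = i) by lia. rewrite Ek. apply Tk; auto. }
      destruct (Eta k Hk) as (eta&He&Hd).
      assert (Ex : exists eta, (0 < eta)%R /\ forall h, T k h -> (Rabs (phi u0 h) < eta)%R -> phi u0 h = 0%R)
        by eauto.
      destruct (rat1 u0 (T k) g0 (a i) (GT k) (T1 k g0 Zg0) Hc Ex (Ti _ (Zspan2_a _ _))) as (N1&HN1&K1).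
      destruct (rat1 u0 (T k) g0 (b i) (GT k) (T1 k g0 Zg0) Hc Ex (Ti _ (Zspan2_b _ _))) as (N2&HN2&K2).
      exists (N1 * N2)%nat. split; [nia|]. apply Zspan2_sub; [apply KP_grp| |].
      - apply KP_mono; auto.
      - rewrite Nat.mul_comm. apply KP_mono; auto. }
    assert (Sub : forall z, sumsets (map (fun i => Zspan2 (a i) (b i)) (seq 1 g)) z -> KP u0 c N z).
    { apply sumsets_sub; [apply KP_grp|]. intros A HA. apply in_map_iff in HA.
      destruct HA as (i&<-&Hi). apply HP; auto. }
    assert (NP : (0 < INR N)%R) by (apply lt_0_INR; lia).
    assert (Cc : (0 < Rabs c)%R) by (apply Rabs_pos_lt; auto).
    set (r := (c / (2 * INR N))%R).
    set (zs := Ci * RtoC r * u0).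
    assert (Pz : phi u0 zs = r).
    { unfold phi, zs. replace (Ci * RtoC r * u0 / u0) with (Ci * RtoC r) by (field; auto).
      unfold Ci, RtoC, Im. simpl. ring. }
    destruct (Dn zs (Cmod u0 * Rabs c / (4 * INR N))%R) as (x&Hx&Hxz).
    { apply Rdiv_lt_0_compat; nra. }
    destruct (Sub x Hx) as (m&Em).
    pose proof (Cmod_phi u0 (x - zs) Hnz) as Hp. rewrite phi_minus, Pz in Hp.
    assert (B1 : (Rabs (phi u0 x - r) < Rabs c / (4 * INR N))%R).
    { eapply Rle_lt_trans; [exact Hp|]. apply (Rmult_lt_reg_l (Cmod u0)); auto.
      replace (Cmod u0 * (Cmod (x - zs) / Cmod u0))%R with (Cmod (x - zs)) by (field; lra).
      replace (Cmod u0 * (Rabs c / (4 * INR N)))%R with (Cmod u0 * Rabs c / (4 * INR N))%R by (field; lra).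
      auto. }
    assert (B2 : (Rabs c * Rabs (IZR m - 1/2) < Rabs c * (1/4))%R).
    { rewrite <- Rabs_mult.
      replace (c * (IZR m - 1 / 2))%R with (INR N * (phi u0 x - r))%R.
      2:{ unfold r. rewrite Rmult_minus_distr_l, Em. field. lra. }
      rewrite Rabs_mult, Rabs_pos_eq by lra.
      apply Rmult_lt_compat_l with (r := INR N) in B1; auto.
      replace (INR N * (Rabs c / (4 * INR N)))%R with (Rabs c * (1/4))%R in B1 by (field; lra). auto. }
    apply Rmult_lt_reg_l in B2; auto. apply (half_int m B2). }
  destruct claimB as (k&Hk&Hw). exists k. split; auto. change (dense_set (T k)).
  apply dense_crit; auto. intros d Hd.
  destruct (small_par (d / 2)%R ltac:(lra)) as (u&Hu&Hun&Hcu&Pu&Qu).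
  destruct (Hw (d / (2 * Cmod u0))%R) as (w&Tw&Pw&Hpw).
  { apply Rdiv_lt_0_compat; lra. }
  destruct (reduce u0 (T k) u w Hnz (GT k) (HT k u Hu) Pu Qu Tw) as (w'&Tw'&Pw'&Cw').
  exists u, w'. split; [apply HT; auto|]. split; [auto|]. split; [auto|]. split; [lra|]. split.
  - pose proof (small_scale _ _ _ Cu0 Hpw). lra.
  - rewrite (Im_div_real u0 u w' Hnz Pu) by lra. rewrite Pw'. unfold Rdiv.
    apply Rmult_integral_contrapositive_currified; auto. apply Rinv_neq_0_compat; lra.
Qed.

Theorem lemma2p2 (g : nat) (a b : nat -> C) :
  (2 <= g)%nat ->
  (forall i, (1 <= i <= g)%nat -> R_lin_indep (a i) (b i)) ->
  ~ discrete_set (sumsets (map (fun i => Zspan2 (a i) (b i)) (seq 1 g))) ->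
  (exists j, (2 <= j <= g)%nat /\
     ~ discrete_set (sumsets (Zspan2 (a 1%nat) (b 1%nat) :: Zspan2 (a j) (b j) :: nil)))
  /\
  (dense_set (sumsets (map (fun i => Zspan2 (a i) (b i)) (seq 1 g))) ->
   forall j, (2 <= j <= g)%nat ->
     ~ discrete_set (sumsets (Zspan2 (a 1%nat) (b 1%nat) :: Zspan2 (a j) (b j) :: nil)) ->
     exists k, (2 <= k <= g)%nat /\
       dense_set (sumsets (Zspan2 (a 1%nat) (b 1%nat) :: Zspan2 (a j) (b j)
                           :: Zspan2 (a k) (b k) :: nil))).
Proof.
  intros Hg HI ND. split.
  - apply part1; auto.
  - intros Dn. apply part2; auto.
Qed.
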